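(* Consider the upper half-space model $\mathbb{H}^3=\{(x_1,x_2,x_3)\in\mathbb{R}^3: x_3>0\}$ with metric $g=\frac{1}{x_3^2}(dx_1^2+dx_2^2+dx_3^2)$. Let $E$ be a complete end of revolution in $\mathbb{H}^3$ about the $x_3$-axis, and suppose there is $c>0$ such that $E$ is contained on (i.e. in the closed region above) the $c$-cone, namely $E\subset\{x\in\mathbb{H}^3: x_3\ge c\sqrt{x_1^2+x_2^2}\}$. Then $E$ is parabolic.
   Context: The $c$-cone ($c>0$) is the surface obtained by rotating the curve $t\mapsto(t,0,ct)$, $t>0$, about the $x_3$-axis; it divides $\mathbb{H}^3$ into a part on (above) it and a part below it. A complete end of revolution about the $x_3$-axis is the set $E=\{(\gamma_1(s)\cos\theta,\gamma_1(s)\sin\theta,\gamma_2(s)): s\ge0,\ \theta\in[0,2\pi)\}$, where $\gamma(s)=(\gamma_1(s),0,\gamma_2(s))$, $s\in[0,\infty)$, is a smooth regular curve in the totally geodesic half-plane $\{x_2=0,x_1>0\}$ (so $\gamma_1>0$, $\gamma_2>0$) of infinite hyperbolic length; $E$ carries the metric induced by this immersion of $[0,\infty)\times\mathbb{S}^1$. An end $E$ is parabolic if every bounded harmonic function on $E$ is determined by its boundary values. *)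

(* Defs.v *)
From Stdlib Require Import Reals.
From Coquelicot Require Import Coquelicot.
Open Scope R_scope.

Definition smooth (f : R -> R) : Prop := forall (n : nat) (x : R), ex_derive_n f n x.

Definition dS (f : R -> R -> R) (s t : R) : R := Derive (fun x => f x t) s.
Definition dT (f : R -> R -> R) (s t : R) : R := Derive (fun y => f s y) t.

(** The immersion X(s,theta) = (g1 s cos theta, g1 s sin theta, g2 s) of
    [0,oo) x S^1 into the upper half-space H^3. *)
Definition X1 (g1 : R -> R) (s t : R) : R := g1 s * cos t.
Definition X2 (g1 : R -> R) (s t : R) : R := g1 s * sin t.
Definition X3 (g2 : R -> R) (s t : R) : R := g2 s.

(** Coefficients E, F, G of the metric induced by g = |dx|^2 / x3^2. *)
Definition metE (g1 g2 : R -> R) (s t : R) : R :=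
  ((dS (X1 g1) s t)^2 + (dS (X2 g1) s t)^2 + (dS (X3 g2) s t)^2) / (X3 g2 s t)^2.
Definition metF (g1 g2 : R -> R) (s t : R) : R :=
  (dS (X1 g1) s t * dT (X1 g1) s t + dS (X2 g1) s t * dT (X2 g1) s t
   + dS (X3 g2) s t * dT (X3 g2) s t) / (X3 g2 s t)^2.
Definition metG (g1 g2 : R -> R) (s t : R) : R :=
  ((dT (X1 g1) s t)^2 + (dT (X2 g1) s t)^2 + (dT (X3 g2) s t)^2) / (X3 g2 s t)^2.
Definition metDet (g1 g2 : R -> R) (s t : R) : R :=
  metE g1 g2 s t * metG g1 g2 s t - (metF g1 g2 s t)^2.

Definition laplaceE (g1 g2 : R -> R) (u : R -> R -> R) (s t : R) : R :=
  / sqrt (metDet g1 g2 s t) *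
  ( dS (fun a b => (metG g1 g2 a b * dS u a b - metF g1 g2 a b * dT u a b)
                   / sqrt (metDet g1 g2 a b)) s t
  + dT (fun a b => (metE g1 g2 a b * dT u a b - metF g1 g2 a b * dS u a b)
                   / sqrt (metDet g1 g2 a b)) s t ).

Definition C2_interior (u : R -> R -> R) : Prop :=
  forall s t, 0 < s ->
    ex_derive (fun x => u x t) s /\ ex_derive (fun y => u s y) t /\
    ex_derive (fun x => dS u x t) s /\ ex_derive (fun y => dS u s y) t /\
    ex_derive (fun x => dT u x t) s /\ ex_derive (fun y => dT u s y) t /\
    continuity_2d_pt u s t /\ continuity_2d_pt (dS u) s t /\
    continuity_2d_pt (dT u) s t /\ continuity_2d_pt (dS (dS u)) s t /\
    continuity_2d_pt (dT (dS u)) s t /\ continuity_2d_pt (dS (dT u)) s t /\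
    continuity_2d_pt (dT (dT u)) s t.

Definition continuous_on_end (u : R -> R -> R) : Prop :=
  forall s t eps, 0 <= s -> 0 < eps -> exists delta, 0 < delta /\
    forall s' t', 0 <= s' -> Rabs (s' - s) < delta -> Rabs (t' - t) < delta ->
      Rabs (u s' t' - u s t) < eps.

(** A function on the end E, i.e. on [0,oo) x S^1 (2pi-periodic in theta),
    continuous up to the boundary and harmonic in the interior for the
    induced metric. *)
Definition harmonic_on_end (g1 g2 : R -> R) (u : R -> R -> R) : Prop :=
  (forall s t, 0 <= s -> u s (t + 2 * PI) = u s t) /\
  continuous_on_end u /\ C2_interior u /\
  (forall s t, 0 < s -> laplaceE g1 g2 u s t = 0).

Definition bounded_on_end (u : R -> R -> R) : Prop :=
  exists M, forall s t, 0 <= s -> Rabs (u s t) <= M.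

(** Parabolicity: every bounded harmonic function on E is determined by its
    boundary values on the boundary circle s = 0. *)
Definition parabolic_end (g1 g2 : R -> R) : Prop :=
  forall u v : R -> R -> R,
    harmonic_on_end g1 g2 u -> bounded_on_end u ->
    harmonic_on_end g1 g2 v -> bounded_on_end v ->
    (forall t, u 0 t = v 0 t) ->
    forall s t, 0 <= s -> u s t = v s t.

(** Hypotheses on the generating curve gamma = (g1, 0, g2), s in [0,oo). *)
Definition complete_end_curve (g1 g2 : R -> R) : Prop :=
  smooth g1 /\ smooth g2 /\
  (forall s, 0 <= s -> 0 < g1 s /\ 0 < g2 s) /\
  (forall s, 0 <= s -> Derive g1 s <> 0 \/ Derive g2 s <> 0) /\
  (* infinite hyperbolic length *)
  (forall M, exists T, 0 <= T /\
     M < RInt (fun s => sqrt ((Derive g1 s)^2 + (Derive g2 s)^2) / g2 s) 0 T).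

(* Main.v *)
Require Import Defs.
From Stdlib Require Import Reals Lra Psatz Classical ClassicalEpsilon.
From Coquelicot Require Import Coquelicot.
Open Scope R_scope.

Definition clamp (a b x : R) := Rmax a (Rmin b x).

Lemma clamp_in a b x : a <= b -> a <= clamp a b x <= b.
Proof. intros; unfold clamp, Rmax, Rmin; repeat destruct Rle_dec; lra. Qed.
Lemma clamp_id a b x : a <= x <= b -> clamp a b x = x.
Proof. intros; unfold clamp, Rmax, Rmin; repeat destruct Rle_dec; lra. Qed.
Lemma clamp_lip a b x y : a <= b -> Rabs (clamp a b x - clamp a b y) <= Rabs (x - y).
Proof.
  intros; unfold clamp, Rmax, Rmin; repeat destruct Rle_dec; split_Rabs; lra.
Qed.

Lemma cont_pt_of (f : R -> R) x0 :
  (forall eps, 0 < eps -> exists d, 0 < d /\ forall x, Rabs (x - x0) < d -> Rabs (f x - f x0) < eps) ->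
  continuity_pt f x0.
Proof.
  intros H eps He. destruct (H eps He) as [d [Hd H']]. exists d; split; auto.
  intros x [_ Hx]. apply H'. exact Hx.
Qed.

Definition box_cont (W : R -> R -> R) a b c d :=
  forall s t, a <= s <= b -> c <= t <= d -> forall eps, 0 < eps -> exists del, 0 < del /\
   forall s' t', a <= s' <= b -> c <= t' <= d -> Rabs (s' - s) < del -> Rabs (t' - t) < del ->
   Rabs (W s' t' - W s t) < eps.

Lemma unif_cont W a b c d : a <= b -> c <= d -> box_cont W a b c d ->
  forall eps, 0 < eps -> exists dd, 0 < dd /\ forall x x' y, a <= x <= b -> a <= x' <= b -> c <= y <= d ->
    Rabs (x - x') < dd -> Rabs (W x y - W x' y) < eps.
Proof.
  intros Hab Hcd HW eps He.
  set (P := fun u v (del : R) => 0 < del /\ (a <= u <= b -> c <= v <= d ->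
   forall s' t', a <= s' <= b -> c <= t' <= d -> Rabs (s' - u) < del -> Rabs (t' - v) < del ->
   Rabs (W s' t' - W u v) < eps / 2)).
  assert (HP : forall u v, exists del, P u v del).
  { intros u v. destruct (classic (a <= u <= b /\ c <= v <= d)) as [[Hu Hv]|Hn].
    - destruct (HW u v Hu Hv (eps/2)) as [del [Hd H]]; [lra|]. exists del; split; auto.
    - exists 1; split; [lra|]. intros Hu Hv; exfalso; tauto. }
  set (D := fun u v => epsilon (inhabits 0) (P u v)).
  assert (HD : forall u v, P u v (D u v)).
  { intros u v. unfold D. apply epsilon_spec. apply HP. }
  assert (Hpos : forall u v, 0 < D u v / 2). { intros u v; destruct (HD u v); lra. }
  set (delta := fun u v => mkposreal _ (Hpos u v)).
  destruct (compactness_value_2d a b c d delta) as [dd Hdd].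
  exists dd; split; [apply cond_pos|].
  intros x x' y Hx Hx' Hy Hxx.
  specialize (Hdd x y Hx Hy). apply NNPP in Hdd.
  destruct Hdd as [u [v [Hu [Hv [H1 [H2 H3]]]]]]. simpl in *.
  destruct (HD u v) as [_ Huv].
  assert (A1 : Rabs (W x y - W u v) < eps/2).
  { pose proof (Hpos u v). apply Huv; auto; lra. }
  assert (A2 : Rabs (W x' y - W u v) < eps/2).
  { pose proof (Hpos u v). apply Huv; auto; [|lra].
    replace (x' - u) with ((x' - x) + (x - u)) by ring.
    eapply Rle_lt_trans; [apply Rabs_triang|]. rewrite (Rabs_minus_sym x' x). lra. }
  replace (W x y - W x' y) with ((W x y - W u v) - (W x' y - W u v)) by ring.
  eapply Rle_lt_trans; [apply Rabs_triang|]. rewrite Rabs_Ropp. lra.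
Qed.

Lemma EVT1 (f : R -> R) c d : c <= d ->
  (forall t, c <= t <= d -> forall eps, 0 < eps -> exists del, 0 < del /\
    forall t', c <= t' <= d -> Rabs (t' - t) < del -> Rabs (f t' - f t) < eps) ->
  exists t0, c <= t0 <= d /\ forall t, c <= t <= d -> f t <= f t0.
Proof.
  intros Hcd Hf.
  destruct (continuity_ab_maj (fun t => f (clamp c d t)) c d Hcd) as [M [HM1 HM2]].
  - intros x Hx. apply cont_pt_of. intros eps He.
    destruct (Hf (clamp c d x) (clamp_in c d x Hcd) eps He) as [del [Hd H]].
    exists del; split; auto. intros y Hy. apply H. apply clamp_in; auto.
    eapply Rle_lt_trans; [apply clamp_lip; auto|]. exact Hy.
  - exists M; split; auto. intros t Ht. specialize (HM1 t Ht).
    rewrite !clamp_id in HM1; auto.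
Qed.

Lemma EVT2 W a b c d : a <= b -> c <= d -> box_cont W a b c d ->
  exists s0 t0, a <= s0 <= b /\ c <= t0 <= d /\
   forall s t, a <= s <= b -> c <= t <= d -> W s t <= W s0 t0.
Proof.
  intros Hab Hcd HW.
  assert (HT : forall s, exists t0, (a <= s <= b -> c <= t0 <= d /\ forall t, c <= t <= d -> W s t <= W s t0)).
  { intros s. destruct (classic (a <= s <= b)) as [Hs|Hs].
    - destruct (EVT1 (W s) c d Hcd) as [t0 Ht0].
      + intros t Ht eps He. destruct (HW s t Hs Ht eps He) as [del [Hd H]].
        exists del; split; auto. intros t' Ht' H'. apply H; auto. rewrite Rminus_diag, Rabs_R0; auto.
      + exists t0; auto.
    - exists 0; intros; tauto. }
  set (T := fun s => epsilon (inhabits 0) (fun t0 => a <= s <= b -> c <= t0 <= d /\ forall t, c <= t <= d -> W s t <= W s t0)).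
  assert (HTs : forall s, a <= s <= b -> c <= T s <= d /\ forall t, c <= t <= d -> W s t <= W s (T s)).
  { intros s Hs. unfold T. apply (epsilon_spec (inhabits 0) _ (HT s)); auto. }
  set (M := fun s => W s (T s)).
  destruct (EVT1 M a b Hab) as [s0 [Hs0 Hmax]].
  - intros s Hs eps He.
    destruct (unif_cont W a b c d Hab Hcd HW (eps/2)) as [dd [Hdd H]]; [lra|].
    exists dd; split; auto. intros s' Hs' Hss.
    destruct (HTs s Hs) as [Ts1 Ts2]. destruct (HTs s' Hs') as [Ts1' Ts2'].
    unfold M.
    assert (B1 := Ts2 (T s') Ts1'). assert (B2 := Ts2' (T s) Ts1).
    assert (C1 := H s' s (T s') Hs' Hs Ts1' Hss).
    assert (C2 := H s' s (T s) Hs' Hs Ts1 Hss).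
    apply Rabs_def1; apply Rabs_def2 in C1; apply Rabs_def2 in C2; lra.
  - exists s0, (T s0). destruct (HTs s0 Hs0) as [A1 A2]. repeat split; try apply A1; try apply Hs0.
    intros s t Hs Ht. eapply Rle_trans; [apply (proj2 (HTs s Hs)); auto|]. apply (Hmax s Hs).
Qed.
Lemma max_test (f P k : R -> R) x0 r l : 0 < r ->
  (forall y, Rabs (y - x0) < r -> f y <= f x0) ->
  (forall y, Rabs (y - x0) < r -> is_derive f y (k y * P y)) ->
  (forall y, Rabs (y - x0) < r -> 0 < k y) ->
  is_derive P x0 l -> l <= 0.
Proof.
  intros Hr Hmax Hd Hk HP.
  destruct (Rle_or_lt l 0) as [|Hl]; auto. exfalso.
  apply is_derive_Reals in HP.
  destruct (HP (l/2)) as [del Hdel]; [lra|].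
  pose proof (cond_pos del) as Hdp.
  set (h := Rmin del r / 2).
  assert (Hh : 0 < h /\ h < del /\ h < r).
  { unfold h, Rmin; destruct Rle_dec; lra. }
  assert (Hq : forall hh, hh <> 0 -> Rabs hh < del ->
     (P (x0 + hh) - P x0) = ((P (x0 + hh) - P x0) / hh) * hh /\
     l/2 < (P (x0 + hh) - P x0) / hh).
  { intros hh H1 H2. split; [field; auto|]. specialize (Hdel hh H1 H2).
    apply Rabs_def2 in Hdel. lra. }
  assert (Hder : forall z, Rabs (z - x0) < r -> derivable_pt_lim f z (k z * P z)).
  { intros z Hz. apply is_derive_Reals. apply Hd; auto. }
  destruct (Rle_or_lt 0 (P x0)) as [HP0|HP0].
  - destruct (MVT_cor2 f (fun z => k z * P z) x0 (x0 + h)) as [c [Hc1 Hc2]]; [lra| |].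
    + intros c Hc. apply Hder. split_Rabs; lra.
    + assert (Hk' : 0 < k c) by (apply Hk; split_Rabs; lra).
      destruct (Hq (c - x0)) as [E1 E2]; [lra|split_Rabs; lra|].
      replace (x0 + (c - x0)) with c in E1, E2 by ring.
      assert (0 < (P c - P x0) / (c - x0) * (c - x0)) by (apply Rmult_lt_0_compat; lra).
      assert (0 < P c) by lra.
      assert (f (x0 + h) <= f x0) by (apply Hmax; split_Rabs; lra).
      assert (0 < k c * P c * (x0 + h - x0)) by (repeat apply Rmult_lt_0_compat; lra).
      lra.
  - destruct (MVT_cor2 f (fun z => k z * P z) (x0 - h) x0) as [c [Hc1 Hc2]]; [lra| |].
    + intros c Hc. apply Hder. split_Rabs; lra.
    + assert (Hk' : 0 < k c) by (apply Hk; split_Rabs; lra).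
      destruct (Hq (c - x0)) as [E1 E2]; [lra|split_Rabs; lra|].
      replace (x0 + (c - x0)) with c in E1, E2 by ring.
      assert ((P c - P x0) / (c - x0) * (x0 - c) > 0) by (apply Rmult_lt_0_compat; lra).
      assert (P c < 0) by lra.
      assert (f (x0 - h) <= f x0) by (apply Hmax; split_Rabs; lra).
      assert (0 < k c * (- P c) * (x0 - (x0 - h))) by (repeat apply Rmult_lt_0_compat; lra).
      lra.
Qed.
Definition Sf (g1 g2 : R -> R) a := Derive g1 a ^ 2 + Derive g2 a ^ 2.
Definition hf (g1 g2 : R -> R) a := sqrt (Sf g1 g2 a) / g1 a.
Definition kf (g1 g2 : R -> R) a := g1 a / sqrt (Sf g1 g2 a).
Definition phi g1 g2 s := RInt (hf g1 g2) 0 s.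

Lemma dS_X1 g1 a b : dS (X1 g1) a b = Derive g1 a * cos b.
Proof. unfold dS, X1. apply Derive_scal_l. Qed.
Lemma dS_X2 g1 a b : dS (X2 g1) a b = Derive g1 a * sin b.
Proof. unfold dS, X2. apply Derive_scal_l. Qed.
Lemma dS_X3 g2 a b : dS (X3 g2) a b = Derive g2 a.
Proof. reflexivity. Qed.
Lemma dT_X1 g1 a b : dT (X1 g1) a b = - (g1 a * sin b).
Proof. unfold dT, X1. rewrite Derive_scal. rewrite (is_derive_unique _ _ _ (is_derive_cos b)). ring. Qed.
Lemma dT_X2 g1 a b : dT (X2 g1) a b = g1 a * cos b.
Proof. unfold dT, X2. rewrite Derive_scal. rewrite (is_derive_unique _ _ _ (is_derive_sin b)). ring. Qed.
Lemma dT_X3 g2 a b : dT (X3 g2) a b = 0.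
Proof. unfold dT, X3. apply Derive_const. Qed.

Lemma met_simpl g1 g2 a b : 0 < g1 a -> 0 < g2 a -> 0 < Sf g1 g2 a ->
  metE g1 g2 a b = Sf g1 g2 a / g2 a ^ 2 /\ metF g1 g2 a b = 0 /\
  metG g1 g2 a b = g1 a ^ 2 / g2 a ^ 2 /\
  sqrt (metDet g1 g2 a b) = sqrt (Sf g1 g2 a) * g1 a / g2 a ^ 2.
Proof.
  intros H1 H2 HS.
  assert (HE : metE g1 g2 a b = Sf g1 g2 a / g2 a ^ 2).
  { unfold metE. rewrite dS_X1, dS_X2, dS_X3. unfold X3, Sf.
    assert (sin b ^ 2 + cos b ^ 2 = 1) by (pose proof (sin2_cos2 b) as Hsc; unfold Rsqr in Hsc; nra).
    unfold Rdiv; f_equal. transitivity (Derive g1 a ^ 2 * (sin b ^ 2 + cos b ^ 2) + Derive g2 a ^ 2); [ring | rewrite H; ring]. }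
  assert (HF : metF g1 g2 a b = 0).
  { unfold metF. rewrite dS_X1, dS_X2, dS_X3, dT_X1, dT_X2, dT_X3. unfold X3. field. lra. }
  assert (HG : metG g1 g2 a b = g1 a ^ 2 / g2 a ^ 2).
  { unfold metG. rewrite dT_X1, dT_X2, dT_X3. unfold X3.
    assert (sin b ^ 2 + cos b ^ 2 = 1) by (pose proof (sin2_cos2 b) as Hsc; unfold Rsqr in Hsc; nra).
    unfold Rdiv; f_equal. transitivity (g1 a ^ 2 * (sin b ^ 2 + cos b ^ 2)); [ring | rewrite H; ring]. }
  repeat split; auto.
  unfold metDet. rewrite HE, HF, HG.
  pose proof (sqrt_lt_R0 _ HS) as Hs.
  rewrite <- (sqrt_pow2 (sqrt (Sf g1 g2 a) * g1 a / g2 a ^ 2)).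
  - f_equal. replace ((sqrt (Sf g1 g2 a) * g1 a / g2 a ^ 2) ^ 2) with (sqrt (Sf g1 g2 a) ^ 2 * g1 a ^ 2 / g2 a ^ 4) by (field; lra). rewrite pow2_sqrt; [|lra]. field. lra.
  - apply Rlt_le. apply Rdiv_lt_0_compat; [apply Rmult_lt_0_compat|]; nra.
Qed.

Lemma flux_s g1 g2 (u : R -> R -> R) a b : 0 < g1 a -> 0 < g2 a -> 0 < Sf g1 g2 a ->
  (metG g1 g2 a b * dS u a b - metF g1 g2 a b * dT u a b) / sqrt (metDet g1 g2 a b)
  = dS u a b * kf g1 g2 a.
Proof.
  intros H1 H2 HS. destruct (met_simpl g1 g2 a b H1 H2 HS) as [_ [HF [HG HD]]].
  rewrite HF, HG, HD. unfold kf. pose proof (sqrt_lt_R0 _ HS). field. nra.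
Qed.

Lemma flux_t g1 g2 (u : R -> R -> R) a b : 0 < g1 a -> 0 < g2 a -> 0 < Sf g1 g2 a ->
  (metE g1 g2 a b * dT u a b - metF g1 g2 a b * dS u a b) / sqrt (metDet g1 g2 a b)
  = dT u a b * hf g1 g2 a.
Proof.
  intros H1 H2 HS. destruct (met_simpl g1 g2 a b H1 H2 HS) as [HE [HF [_ HD]]].
  rewrite HF, HE, HD. unfold hf. pose proof (sqrt_lt_R0 _ HS) as Hs.
  replace (Sf g1 g2 a) with (sqrt (Sf g1 g2 a) ^ 2) at 1 by (apply pow2_sqrt; lra).
  field. nra.
Qed.
Lemma hf_der g1 g2 z : ex_derive g1 z -> ex_derive (Derive g1) z -> ex_derive (Derive g2) z ->
  0 < g1 z -> 0 < Sf g1 g2 z -> ex_derive (hf g1 g2) z /\ ex_derive (kf g1 g2) z.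
Proof.
  intros H1 H2 H3 Hg HS. unfold hf, kf, Sf in *. split; auto_derive; repeat split; auto; try lra.
  apply Rgt_not_eq. apply sqrt_lt_R0. lra.
Qed.

Definition good (g1 g2 : R -> R) := (forall x, ex_derive g1 x) /\ (forall x, ex_derive (Derive g1) x) /\
  (forall x, ex_derive g2 x) /\ (forall x, ex_derive (Derive g2) x) /\
  (forall s, 0 <= s -> 0 < g1 s /\ 0 < g2 s) /\ (forall s, 0 <= s -> 0 < Sf g1 g2 s).

Lemma good_of g1 g2 : complete_end_curve g1 g2 -> good g1 g2.
Proof.
  intros [S1 [S2 [Hp [Hr _]]]].
  repeat split; try (intros; apply Hp; auto).
  - intro x. exact (S1 1%nat x).
  - intro x. exact (S1 2%nat x).
  - intro x. exact (S2 1%nat x).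
  - intro x. exact (S2 2%nat x).
  - intros s Hs. unfold Sf. destruct (Hr s Hs) as [H|H].
    + assert (0 < Derive g1 s ^ 2) by (apply pow2_gt_0; auto). nra.
    + assert (0 < Derive g2 s ^ 2) by (apply pow2_gt_0; auto). nra.
Qed.

Section PhiFacts.
End PhiFacts.

Lemma hf_derz g1 g2 z : good g1 g2 -> 0 <= z -> ex_derive (hf g1 g2) z /\ ex_derive (kf g1 g2) z.
Proof.
  intros [H1 [H2 [H3 [H4 [Hp HS]]]]] Hz. apply hf_der; auto. apply Hp; auto.
Qed.

Lemma hf_pos g1 g2 z : good g1 g2 -> 0 <= z -> 0 < hf g1 g2 z.
Proof.
  intros [H1 [H2 [H3 [H4 [Hp HS]]]]] Hz. unfold hf. apply Rdiv_lt_0_compat.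
  apply sqrt_lt_R0; auto. apply Hp; auto.
Qed.

Lemma hf_kf g1 g2 z : good g1 g2 -> 0 <= z -> hf g1 g2 z * kf g1 g2 z = 1.
Proof.
  intros [H1 [H2 [H3 [H4 [Hp HS]]]]] Hz. unfold hf, kf.
  pose proof (sqrt_lt_R0 _ (HS z Hz)). pose proof (proj1 (Hp z Hz)). field. lra.
Qed.

Lemma phi_ex g1 g2 a b : good g1 g2 -> 0 <= a -> 0 <= b -> ex_RInt (hf g1 g2) a b.
Proof.
  intros G Ha Hb. apply (@ex_RInt_continuous R_CompleteNormedModule). intros z Hz.
  apply (@ex_derive_continuous R_AbsRing R_NormedModule). apply (hf_derz g1 g2 z G).
  unfold Rmin, Rmax in Hz; destruct Rle_dec; lra.
Qed.

Lemma phi_0 g1 g2 : phi g1 g2 0 = 0.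
Proof. unfold phi. rewrite RInt_point. reflexivity. Qed.

Lemma phi_diff g1 g2 a b : good g1 g2 -> 0 <= a -> 0 <= b -> phi g1 g2 b - phi g1 g2 a = RInt (hf g1 g2) a b.
Proof.
  intros G Ha Hb. unfold phi.
  rewrite <- (RInt_Chasles (hf g1 g2) 0 a b); try apply phi_ex; auto; try lra.
  unfold plus; simpl; ring.
Qed.

Lemma phi_mono g1 g2 a b : good g1 g2 -> 0 <= a <= b -> phi g1 g2 a <= phi g1 g2 b.
Proof.
  intros G Hab. assert (phi g1 g2 b - phi g1 g2 a >= 0); [|lra].
  rewrite phi_diff; auto; try lra. apply Rle_ge. apply RInt_ge_0; try lra.
  apply phi_ex; auto; lra. intros x Hx. apply Rlt_le, hf_pos; auto; lra.
Qed.

Lemma phi_der g1 g2 s : good g1 g2 -> 0 < s -> is_derive (phi g1 g2) s (hf g1 g2 s).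
Proof.
  intros G Hs. unfold phi. apply (is_derive_RInt (hf g1 g2) (fun s => RInt (hf g1 g2) 0 s) 0).
  - exists (mkposreal _ Hs). intros y Hy. apply (@RInt_correct R_CompleteNormedModule). apply phi_ex; auto; try lra.
    unfold ball in Hy; simpl in Hy; unfold AbsRing_ball, abs, minus, plus, opp in Hy; simpl in Hy.
    apply Rabs_def2 in Hy. lra.
  - apply (@ex_derive_continuous R_AbsRing R_NormedModule). apply (hf_derz g1 g2 s G). lra.
Qed.

Lemma phi_lip g1 g2 R0 : good g1 g2 -> 0 <= R0 -> exists H, 0 <= H /\
  forall x y, 0 <= x <= R0 -> 0 <= y <= R0 -> Rabs (phi g1 g2 x - phi g1 g2 y) <= H * Rabs (x - y).
Proof.
  intros G HR.
  destruct (continuity_ab_maj (hf g1 g2) 0 R0 HR) as [M [HM1 HM2]].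
  { intros c Hc. apply derivable_continuous_pt. apply ex_derive_Reals_0.
    apply (hf_derz g1 g2 c G). lra. }
  exists (hf g1 g2 M). split. { apply Rlt_le, hf_pos; auto; lra. }
  assert (K : forall x y, 0 <= x <= R0 -> 0 <= y <= R0 -> x <= y ->
     Rabs (phi g1 g2 x - phi g1 g2 y) <= hf g1 g2 M * Rabs (x - y)).
  { intros x y Hx Hy Hxy. rewrite Rabs_minus_sym, phi_diff; auto; try lra.
    replace (Rabs (x - y)) with (y - x) by (rewrite Rabs_minus_sym; rewrite Rabs_pos_eq; lra).
    rewrite Rmult_comm. apply abs_RInt_le_const; auto. apply phi_ex; auto; lra.
    intros t Ht. rewrite Rabs_pos_eq. apply HM1; lra. apply Rlt_le, hf_pos; auto; lra. }
  intros x y Hx Hy. destruct (Rle_or_lt x y). apply K; auto.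
  rewrite Rabs_minus_sym, (Rabs_minus_sym x). apply K; auto; lra.
Qed.

Lemma cone_g g1 g2 c s : 0 < g1 s ->
  c * sqrt ((X1 g1 s 0)^2 + (X2 g1 s 0)^2) <= X3 g2 s 0 -> c * g1 s <= g2 s.
Proof.
  intros Hg H. unfold X1, X2, X3 in H. rewrite cos_0, sin_0 in H.
  replace ((g1 s * 1) ^ 2 + (g1 s * 0) ^ 2) with (g1 s ^ 2) in H by ring.
  rewrite sqrt_pow2 in H; lra.
Qed.

Lemma phi_unb g1 g2 c : complete_end_curve g1 g2 -> 0 < c ->
  (forall s t, 0 <= s -> c * sqrt ((X1 g1 s t)^2 + (X2 g1 s t)^2) <= X3 g2 s t) ->
  forall M, exists T, 0 <= T /\ M < phi g1 g2 T.
Proof.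
  intros HC Hc Hcone M.
  pose proof (good_of g1 g2 HC) as G.
  destruct G as [H1 [H2 [H3 [H4 [Hp HS]]]]] eqn:EG.
  destruct HC as [_ [_ [_ [_ Hinf]]]].
  destruct (Hinf (M / c)) as [T [HT HMT]].
  exists T; split; auto.
  set (q := fun s => sqrt ((Derive g1 s)^2 + (Derive g2 s)^2) / g2 s) in *.
  assert (Hq : ex_RInt q 0 T).
  { apply (@ex_RInt_continuous R_CompleteNormedModule). intros z Hz.
    assert (0 <= z) by (unfold Rmin in Hz; destruct Rle_dec; lra).
    apply (@ex_derive_continuous R_AbsRing R_NormedModule). unfold q.
    auto_derive. repeat split; auto. apply HS; auto. apply Rgt_not_eq, Hp; auto. }
  assert (Hle : RInt (fun s => c * q s) 0 T <= phi g1 g2 T).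
  { unfold phi. apply RInt_le; auto.
    - apply (ex_RInt_scal (V:=R_CompleteNormedModule) q 0 T c); auto.
    - apply phi_ex; auto; lra.
    - intros x Hx. destruct (Hp x ltac:(lra)) as [Hg1 Hg2].
      pose proof (cone_g g1 g2 c x Hg1 (Hcone x 0 ltac:(lra))).
      unfold q, hf, Sf. set (z := sqrt (Derive g1 x ^ 2 + Derive g2 x ^ 2)).
      assert (0 <= z) by apply sqrt_pos.
      apply Rmult_le_reg_r with (g1 x * g2 x); [nra|].
      field_simplify; try lra. nra. }
  assert (E : RInt (fun s => c * q s) 0 T = c * RInt q 0 T) by exact (RInt_scal (V:=R_CompleteNormedModule) q 0 T c Hq).
  rewrite E in Hle.
  apply Rmult_lt_compat_l with (r := c) in HMT; auto.
  replace (c * (M / c)) with M in HMT by (field; lra). lra.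
Qed.
Lemma dS_loc (F : R -> R -> R) G s t r : 0 < r -> (forall a, Rabs (a - s) < r -> F a t = G a) ->
  dS F s t = Derive G s.
Proof.
  intros Hr H. unfold dS. apply Derive_ext_loc. exists (mkposreal _ Hr). intros y Hy.
  apply H. unfold ball in Hy; simpl in Hy; unfold AbsRing_ball, abs, minus, plus, opp in Hy; simpl in Hy.
  exact Hy.
Qed.

Lemma dT_glob (F : R -> R -> R) G s t : (forall b, F s b = G b) -> dT F s t = Derive G t.
Proof. intros H. unfold dT. apply Derive_ext. exact H. Qed.

Lemma sqrtdet_pos g1 g2 s t : good g1 g2 -> 0 <= s -> 0 < sqrt (metDet g1 g2 s t).
Proof.
  intros G Hs. destruct G as [H1 [H2 [H3 [H4 [Hp HS]]]]].
  destruct (Hp s Hs) as [A1 A2].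
  destruct (met_simpl g1 g2 s t A1 A2 (HS s Hs)) as [_ [_ [_ E]]]. rewrite E.
  pose proof (sqrt_lt_R0 _ (HS s Hs)). apply Rdiv_lt_0_compat; [apply Rmult_lt_0_compat|]; nra.
Qed.

Lemma lap_eq g1 g2 u s t : good g1 g2 -> 0 < s ->
  laplaceE g1 g2 u s t = / sqrt (metDet g1 g2 s t) *
    (Derive (fun a => dS u a t * kf g1 g2 a) s + Derive (fun b => dT u s b) t * hf g1 g2 s).
Proof.
  intros G Hs. pose proof G as G'. destruct G' as [H1 [H2 [H3 [H4 [Hp HS]]]]].
  unfold laplaceE. f_equal. f_equal.
  - apply (dS_loc _ _ s t s Hs). intros a Ha. apply Rabs_def2 in Ha.
    destruct (Hp a ltac:(lra)). apply flux_s; auto. apply HS; lra.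
  - rewrite <- Derive_scal_l. apply dT_glob. intros b.
    destruct (Hp s ltac:(lra)). apply flux_t; auto. apply HS; lra.
Qed.

Lemma isd_eq (f : R -> R) (x l1 l2 : R) : is_derive f x l1 -> l1 = l2 -> is_derive f x l2.
Proof. intros H <-; exact H. Qed.
Lemma isd_plus (f g : R -> R) x df dg : is_derive f x df -> is_derive g x dg ->
  is_derive (fun y => f y + g y) x (df + dg).
Proof. intros; exact (is_derive_plus f g x df dg H H0). Qed.
Lemma isd_minus (f g : R -> R) x df dg : is_derive f x df -> is_derive g x dg ->
  is_derive (fun y => f y - g y) x (df - dg).
Proof. intros; exact (is_derive_minus f g x df dg H H0). Qed.
Lemma isd_mult (f g : R -> R) x df dg : is_derive f x df -> is_derive g x dg ->
  is_derive (fun y => f y * g y) x (df * g x + f x * dg).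
Proof. intros; exact (is_derive_mult f g x df dg H H0 Rmult_comm). Qed.
Lemma isd_const (a x : R) : is_derive (fun _ => a) x 0.
Proof. exact (is_derive_const a x). Qed.
Lemma one_side g1 g2 c (u v : R -> R -> R) :
  complete_end_curve g1 g2 -> 0 < c ->
  (forall s t, 0 <= s -> c * sqrt ((X1 g1 s t)^2 + (X2 g1 s t)^2) <= X3 g2 s t) ->
  harmonic_on_end g1 g2 u -> bounded_on_end u ->
  harmonic_on_end g1 g2 v -> bounded_on_end v ->
  (forall t, u 0 t = v 0 t) ->
  forall s1 t1, 0 < s1 -> u s1 t1 - v s1 t1 <= 0.
Proof.
  intros HC Hc Hcone [Pu [Cu [C2u Lu]]] [Bu HBu] [Pv [Cv [C2v Lv]]] [Bv HBv] H0 s1 t1 Hs1.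
  pose proof (good_of _ _ HC) as G.
  destruct (Rle_or_lt (u s1 t1 - v s1 t1) 0) as [|Heta]; auto. exfalso.
  set (eta := u s1 t1 - v s1 t1) in *.
  set (B := Bu + Bv).
  assert (HB : forall s t, 0 <= s -> Rabs (u s t - v s t) <= B).
  { intros s t Hs. unfold B. pose proof (HBu s t Hs); pose proof (HBv s t Hs). split_Rabs; lra. }
  assert (HB0 : 0 <= B) by (pose proof (HB 0 0 (Rle_refl 0)); pose proof (Rabs_pos (u 0 0 - v 0 0)); lra).
  set (ph := phi g1 g2).
  assert (Hph0 : ph 0 = 0) by apply phi_0.
  assert (Hphnn : forall s, 0 <= s -> 0 <= ph s) by (intros s Hs; rewrite <- Hph0; apply phi_mono; auto; lra).
  set (p1 := ph s1).
  assert (Hp1 : 0 <= p1) by (apply Hphnn; lra).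
  set (eps := eta / (4 * (p1 + 1))).
  assert (Heps : 0 < eps) by (unfold eps; apply Rdiv_lt_0_compat; lra).
  assert (Hep1 : eps * (p1 + 1) = eta / 4) by (unfold eps; field; lra).
  destruct (phi_unb g1 g2 c HC Hc Hcone (4 * B / eps + 1)) as [T [HT HTp]].
  set (R0 := Rmax T (s1 + 1)).
  assert (HR0 : T <= R0 /\ s1 + 1 <= R0) by (unfold R0, Rmax; destruct Rle_dec; lra).
  set (pR := ph R0).
  assert (HpR : 4 * B / eps + 1 < pR).
  { apply Rlt_le_trans with (ph T); auto. apply phi_mono; auto; lra. }
  assert (H4B : 0 <= 4 * B / eps) by (apply Rdiv_le_0_compat; lra).
  assert (HpRpos : 0 < pR) by lra.
  assert (HpR' : eps * pR > 4 * B + eps).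
  { replace (4*B) with (eps * (4*B/eps)) by (field; lra). nra. }
  set (del := eps / (2 * pR)).
  assert (Hdel : 0 < del) by (unfold del; apply Rdiv_lt_0_compat; lra).
  assert (Hdelp : del * pR = eps / 2) by (unfold del; field; lra).
  assert (Hphle : forall s, 0 <= s <= R0 -> ph s <= pR) by (intros; apply phi_mono; auto; lra).
  set (W := fun s t => (u s t - v s t) + (- eps * ph s + del * (ph s * ph s))).
  destruct (phi_lip g1 g2 R0 G) as [H [HH Hlip]]; [lra|].
  pose proof PI_RGT_0 as HPI.
  destruct (EVT2 W 0 R0 t1 (t1 + 2 * PI)) as [s0 [t0 [Hs0 [Ht0 Hmax]]]]; [lra|lra| |].
  { intros s t Hs Ht e He.
    destruct (Cu s t (e/3) (proj1 Hs)) as [d1 [Hd1 Hu1]]; [lra|].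
    destruct (Cv s t (e/3) (proj1 Hs)) as [d2 [Hd2 Hv1]]; [lra|].
    set (d3 := e / (3 * (eps * H + 1))).
    assert (Hd3 : 0 < d3) by (unfold d3; apply Rdiv_lt_0_compat; nra).
    assert (Hd3' : eps * H * d3 <= e / 3).
    { unfold d3. apply Rmult_le_reg_r with (3 * (eps * H + 1)); [nra|].
      replace (eps * H * (e / (3 * (eps * H + 1))) * (3 * (eps * H + 1))) with (eps * H * e) by (field; nra).
      nra. }
    exists (Rmin d1 (Rmin d2 d3)). split. { repeat apply Rmin_glb_lt; auto. }
    intros s' t' Hs' Ht' Hss Htt.
    pose proof (Rmin_l d1 (Rmin d2 d3)). pose proof (Rmin_r d1 (Rmin d2 d3)).
    pose proof (Rmin_l d2 d3). pose proof (Rmin_r d2 d3).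
    assert (A1 := Hu1 s' t' (proj1 Hs') ltac:(lra) ltac:(lra)).
    assert (A2 := Hv1 s' t' (proj1 Hs') ltac:(lra) ltac:(lra)).
    assert (A3 := Hlip s' s Hs' Hs).
    assert (Hq1 := Hphnn s (proj1 Hs)). assert (Hq2 := Hphnn s' (proj1 Hs')).
    assert (Hq3 := Hphle s Hs). assert (Hq4 := Hphle s' Hs').
    set (Dq := - eps + del * (ph s' + ph s)).
    assert (HDq : Rabs Dq <= eps).
    { unfold Dq. apply Rabs_le. split; nra. }
    assert (A4 : Rabs ((ph s' - ph s) * Dq) <= e / 3).
    { rewrite Rabs_mult. apply Rle_trans with (H * Rabs (s' - s) * eps).
      - apply Rmult_le_compat; auto using Rabs_pos.
      - assert (Rabs (s' - s) <= d3) by lra. apply Rle_trans with (eps * H * d3); [|auto].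
        replace (H * Rabs (s' - s) * eps) with ((eps * H) * Rabs (s' - s)) by ring.
        apply Rmult_le_compat_l; nra. }
    replace (W s' t' - W s t) with ((u s' t' - u s t) - (v s' t' - v s t) + (ph s' - ph s) * Dq)
      by (unfold W, Dq; ring).
    apply Rabs_def2 in A1. apply Rabs_def2 in A2. assert (A5 := Rle_abs ((ph s' - ph s) * Dq)). assert (A6 := Rle_abs (-((ph s' - ph s) * Dq))). rewrite Rabs_Ropp in A6.
    apply Rabs_def1; lra. }

  assert (HW1 : 0 < W s1 t1).
  { unfold W. fold eta. fold p1. assert (0 <= del * (p1 * p1)) by (apply Rmult_le_pos; nra).
    assert (eps * p1 <= eps * (p1 + 1)) by nra. lra. }
  assert (HWm : 0 < W s0 t0).
  { apply Rlt_le_trans with (W s1 t1); auto. apply Hmax; lra. }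
  assert (Hs0pos : 0 < s0).
  { destruct (proj1 Hs0) as [|E]; auto. exfalso. subst s0.
    unfold W in HWm. rewrite H0, Hph0 in HWm. lra. }
  assert (Hs0R : s0 < R0).
  { destruct (proj2 Hs0) as [|E]; auto. exfalso. subst s0.
    unfold W in HWm. fold pR in HWm.
    pose proof (Rle_abs (u R0 t0 - v R0 t0)). pose proof (HB R0 t0 ltac:(lra)).
    assert (del * (pR * pR) = eps * pR / 2) by (rewrite <- Rmult_assoc, Hdelp; field).
    lra. }
  assert (Wper : forall t, Rabs (t - t0) < 2 * PI -> W s0 t <= W s0 t0).
  { intros t Ht. apply Rabs_def2 in Ht.
    destruct (Rle_or_lt t1 t) as [Ha|Ha]; [destruct (Rle_or_lt t (t1 + 2 * PI)) as [Hb|Hb]|].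
    - apply Hmax; lra.
    - assert (Eu : u s0 t = u s0 (t - 2 * PI)).
      { rewrite <- (Pu s0 (t - 2 * PI)); [f_equal; ring | lra]. }
      assert (Ev : v s0 t = v s0 (t - 2 * PI)).
      { rewrite <- (Pv s0 (t - 2 * PI)); [f_equal; ring | lra]. }
      apply Rle_trans with (W s0 (t - 2 * PI)); [unfold W; rewrite Eu, Ev; lra|].
      apply Hmax; lra.
    - assert (Eu : u s0 t = u s0 (t + 2 * PI)) by (symmetry; apply Pu; lra).
      assert (Ev : v s0 t = v s0 (t + 2 * PI)) by (symmetry; apply Pv; lra).
      apply Rle_trans with (W s0 (t + 2 * PI)); [unfold W; rewrite Eu, Ev; lra|].
      apply Hmax; lra. }
  assert (Ttest : Derive (fun y => dT u s0 y) t0 - Derive (fun y => dT v s0 y) t0 <= 0).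
  { apply (max_test (fun t => W s0 t) (fun t => dT u s0 t - dT v s0 t) (fun _ => 1) t0 (2 * PI)).
    - lra.
    - exact Wper.
    - intros y _. unfold W. eapply isd_eq.
      + apply isd_plus; [apply isd_minus|apply isd_const].
        * apply Derive_correct. apply (C2u s0 y Hs0pos).
        * apply Derive_correct. apply (C2v s0 y Hs0pos).
      + unfold dT. rewrite Rplus_0_r, Rmult_1_l. reflexivity.
    - intros; lra.
    - apply isd_minus; apply Derive_correct.
      + apply (C2u s0 t0 Hs0pos).
      + apply (C2v s0 t0 Hs0pos). }
  pose (rr := Rmin s0 (R0 - s0)).
  assert (Hr : 0 < rr) by (apply Rmin_glb_lt; lra).
  assert (Hra : forall a, Rabs (a - s0) < rr -> 0 < a < R0).
  { intros a Ha. apply Rabs_def2 in Ha. pose proof (Rmin_l s0 (R0 - s0)). pose proof (Rmin_r s0 (R0 - s0)).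
    unfold rr in Ha. lra. }
  set (Du := Derive (fun a => dS u a t0 * kf g1 g2 a) s0).
  set (Dv := Derive (fun a => dS v a t0 * kf g1 g2 a) s0).
  assert (exk : ex_derive (kf g1 g2) s0) by (apply (hf_derz g1 g2 s0 G); lra).
  assert (Stest : Du - Dv - 0 + 2 * del * hf g1 g2 s0 <= 0).
  { apply (max_test (fun a => W a t0)
      (fun a => dS u a t0 * kf g1 g2 a - dS v a t0 * kf g1 g2 a - eps + 2 * del * ph a) (hf g1 g2) s0 rr).
    - exact Hr.
    - intros a Ha. apply Hmax; [pose proof (Hra a Ha); lra | lra].
    - intros a Ha. destruct (Hra a Ha) as [Ha1 Ha2].
      assert (HK := hf_kf g1 g2 a G ltac:(lra)).
      unfold W. eapply isd_eq.
      + apply isd_plus; [apply isd_minus|apply isd_plus].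
        * apply Derive_correct. apply (C2u a t0 Ha1).
        * apply Derive_correct. apply (C2v a t0 Ha1).
        * apply is_derive_scal. apply phi_der; auto.
        * apply is_derive_scal. apply isd_mult; apply phi_der; auto.
      + unfold dS, ph.
        change (Derive (fun y : R_AbsRing => u y t0) a) with (Derive (fun x : R => u x t0) a).
        change (Derive (fun y : R_AbsRing => v y t0) a) with (Derive (fun x : R => v x t0) a).
        transitivity (hf g1 g2 a * kf g1 g2 a * Derive (fun x : R => u x t0) a
          - hf g1 g2 a * kf g1 g2 a * Derive (fun x : R => v x t0) a
          + (- eps * hf g1 g2 a + del * (hf g1 g2 a * phi g1 g2 a + phi g1 g2 a * hf g1 g2 a)));
        [rewrite HK; ring | ring].
    - intros a Ha. apply hf_pos; auto. pose proof (Hra a Ha); lra.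
    - apply isd_plus; [apply isd_minus; [apply isd_minus|apply isd_const]|].
      + apply Derive_correct. apply ex_derive_mult; auto. apply (C2u s0 t0 Hs0pos).
      + apply Derive_correct. apply ex_derive_mult; auto. apply (C2v s0 t0 Hs0pos).
      + apply is_derive_scal. apply phi_der; auto. }
  assert (Lap : forall w, laplaceE g1 g2 w s0 t0 = 0 ->
     Derive (fun a => dS w a t0 * kf g1 g2 a) s0 + Derive (fun b => dT w s0 b) t0 * hf g1 g2 s0 = 0).
  { intros w Hw. rewrite lap_eq in Hw; auto.
    pose proof (sqrtdet_pos g1 g2 s0 t0 G ltac:(lra)).
    apply Rmult_integral in Hw. destruct Hw as [Hw|Hw]; auto.
    exfalso. apply (Rinv_neq_0_compat _ (Rgt_not_eq _ _ H1)). exact Hw. }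
  assert (Lu' := Lap u (Lu s0 t0 Hs0pos)). assert (Lv' := Lap v (Lv s0 t0 Hs0pos)).
  fold Du in Lu'. fold Dv in Lv'.
  assert (Hh := hf_pos g1 g2 s0 G ltac:(lra)).
  set (Uu := Derive (fun b => dT u s0 b) t0) in *.
  set (Uv := Derive (fun b => dT v s0 b) t0) in *.
  assert (0 <= - (Uu - Uv) * hf g1 g2 s0) by nra.
  assert (0 < 2 * del * hf g1 g2 s0) by nra.
  lra.
Qed.

Theorem theoremB (g1 g2 : R -> R) (c : R) :
  complete_end_curve g1 g2 ->
  0 < c ->
  (forall s t, 0 <= s ->
     c * sqrt ((X1 g1 s t)^2 + (X2 g1 s t)^2) <= X3 g2 s t) ->
  parabolic_end g1 g2.
Proof.
  intros HC Hc Hcone u v Hu Bu Hv Bv H0 s t Hs.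
  destruct Hs as [Hs|Hs].
  - pose proof (one_side g1 g2 c u v HC Hc Hcone Hu Bu Hv Bv H0 s t Hs).
    assert (H0' : forall t, v 0 t = u 0 t) by (intros; symmetry; auto).
    pose proof (one_side g1 g2 c v u HC Hc Hcone Hv Bv Hu Bu H0' s t Hs). lra.
  - subst s. apply H0.
Qed.
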